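(* Let $X\in\mathbb{R}^{n\times n}$ be a matrix all of whose entries are non-zero. Then the appraisal network $G(X)$ satisfies social balance if and only if (S1) $X_{ii}>0$ for every $i\in\{1,\dots,n\}$, and (S3) $\operatorname{sign}(X_{i*})=\pm\operatorname{sign}(X_{j*})$ for all $i,j\in\{1,\dots,n\}$. Moreover, if $G(X)$ satisfies social balance, then $X$ is sign-symmetric, i.e., $\operatorname{sign}(X)=\operatorname{sign}(X)^{\top}$.
   Context: For a matrix $X$, $X_{i*}$ denotes its $i$-th row and $\operatorname{sign}(X)$ is the entry-wise sign ($1$ for positive, $-1$ for negative, $0$ for zero entries). $G(X)$ is the weighted digraph with (possibly negative) adjacency matrix $X$. $G(X)$ satisfies social balance (is structurally balanced) if (S1) $X_{ii}>0$ for all $i$, and (S2) $\operatorname{sign}(X_{ij})\operatorname{sign}(X_{jk})\operatorname{sign}(X_{ki})=1$ for all $i,j,k\in\{1,\dots,n\}$. *)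

(* Defs.v *)
From mathcomp Require Import all_boot all_order all_algebra.
Set Implicit Arguments. Unset Strict Implicit. Unset Printing Implicit Defensive.
Import Order.TTheory GRing.Theory Num.Theory.
Local Open Scope ring_scope.

Definition sign_mx (R : realFieldType) (m n : nat) (X : 'M[R]_(m, n)) : 'M[R]_(m, n) :=
  map_mx (fun x => Num.sg x) X.

Definition social_balance (R : realFieldType) (n : nat) (X : 'M[R]_n) : Prop :=
  (forall i : 'I_n, 0 < X i i) /\
  (forall i j k : 'I_n, Num.sg (X i j) * Num.sg (X j k) * Num.sg (X k i) = 1).

Definition rows_sign_pm (R : realFieldType) (n : nat) (X : 'M[R]_n) : Prop :=
  forall i j : 'I_n, exists2 s : R, (s = 1 \/ s = -1) &
    row i (sign_mx X) = s *: row j (sign_mx X).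

(* Main.v *)
Require Import Defs.
From mathcomp Require Import all_boot all_order all_algebra.
Import Order.TTheory GRing.Theory Num.Theory.
Local Open Scope ring_scope.

Lemma aux_sym (R : realFieldType) (a b : R) : a * b = 1 -> a * a = 1 -> b = a.
Proof. by move=> H1 H2; rewrite -[b]mul1r -H2 -mulrA H1 mulr1. Qed.

Lemma aux_tri (R : realFieldType) (a b c : R) : c * c = 1 -> a * b * c = 1 -> a * b = c.
Proof. by move=> H1 H2; rewrite -[a*b]mulr1 -H1 mulrA H2 mul1r. Qed.

Lemma sgsq (R : realFieldType) (x : R) : x != 0 -> Num.sg x * Num.sg x = 1.
Proof. by move=> h; rewrite -expr2 sqr_sg h. Qed.

Lemma ent (R : realFieldType) n (X : 'M[R]_n) i k :
  row i (sign_mx X) 0 k = Num.sg (X i k).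
Proof. by rewrite !mxE. Qed.

Theorem lemma2p2 (R : realFieldType) (n : nat) (X : 'M[R]_n)
  (hX : forall i j : 'I_n, X i j != 0) :
  (social_balance X <-> ((forall i : 'I_n, 0 < X i i) /\ rows_sign_pm X)) /\
  (social_balance X -> sign_mx X = (sign_mx X)^T).
Proof.
have sq i j : Num.sg (X i j) * Num.sg (X i j) = 1 by apply: sgsq.
have symB : social_balance X -> forall i k, Num.sg (X k i) = Num.sg (X i k).
  move=> [S1 S2] i k; apply: aux_sym (sq i k).
  by have := S2 i i k; rewrite gtr0_sg // mul1r.
split; last first.
  move=> B; apply/matrixP => i j; rewrite !mxE; exact: symB.
split.
  move=> B; split; first by case: B.
  move=> i j; exists (Num.sg (X i j)); first by move: (hX i j); case: (ltrgtP (X i j) 0) => h; [right; rewrite ltr0_sg | left; rewrite gtr0_sg | by []].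
  apply/rowP => k; rewrite !mxE; symmetry.
  rewrite (symB B k i); apply: aux_tri (sq k i) _.
  by case: B => _ S2; apply: S2.
move=> [S1 S3].
have key : forall i j k, Num.sg (X i k) = Num.sg (X i j) * Num.sg (X j k) /\ Num.sg (X j i) = Num.sg (X i j).
  move=> i j k; have [c _ Hc] := S3 i j.
  have E m : Num.sg (X i m) = c * Num.sg (X j m).
    by have := congr1 (fun M : 'rV[R]_n => M 0 m) Hc; rewrite !mxE.
  have Ej := E j; rewrite (gtr0_sg (S1 j)) mulr1 in Ej.
  have Ei := E i; rewrite (gtr0_sg (S1 i)) in Ei.
  split; first by rewrite E Ej.
  rewrite Ej; apply: aux_sym; first by rewrite -Ei.
  idtac.
  by rewrite -Ej sq.
split => // i j k.
by rewrite -(key i j k).1 (key i k k).2 sq.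
Qed.
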